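(* Let $A$ be a finite dimensional algebra over a field and $\underline{M}=(M,M')$ a bonded pair of $A$-$A$-bimodules. Then the space $\mathbb{T}_A(\underline{M})=\bigoplus_{i\ge1}M^{\otimes_Ai}\oplus A\oplus\bigoplus_{i\le-1}M'^{\otimes_A -i}$ (with $A$ in degree $0$, $M^{\otimes_A i}$ in degree $i$, $M'^{\otimes_A -i}$ in degree $i<0$) is a $\mathbb{Z}$-graded algebra, whose product of an element of degree $i_1$ with an element of degree $i_2$ is the natural bimodule homomorphism into the degree $i_1+i_2$ component obtained by concatenating tensors and applying the bonding maps $M\otimes_AM'\to A$, $M'\otimes_AM\to A$ to adjacent factors as many times as possible (with $M^{\otimes_A0}=M'^{\otimes_A0}=A$).
   Context: A pair $\underline M=(M,M')$ of $A$-$A$-bimodules is bonded if there are bimodule homomorphisms $M\otimes_AM'\to A$ and $M'\otimes_AM\to A$ such that the two resulting maps $M\otimes_AM'\otimes_AM\to M$ are equal and the two resulting maps $M'\otimes_AM\otimes_AM'\to M'$ are equal. *)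

(* Defs.v *)
From HB Require Import structures.
From mathcomp Require Import all_boot all_order all_algebra.
From mathcomp Require Import falgebra.
Set Implicit Arguments. Unset Strict Implicit. Unset Printing Implicit Defensive.
Import GRing.Theory.
Local Open Scope ring_scope.

Section TensorAlgebraOfBondedPair.
Variables (K : fieldType) (A : falgType K).

Definition is_bimod (M : lmodType K) (l : A -> M -> M) (r : M -> A -> M) : Prop :=
     (forall a b m, l (a + b) m = l a m + l b m)
  /\ (forall a m n, l a (m + n) = l a m + l a n)
  /\ (forall k a m, l (k *: a) m = k *: l a m)
  /\ (forall k a m, l a (k *: m) = k *: l a m)
  /\ (forall m, l 1 m = m)
  /\ (forall a b m, l (a * b) m = l a (l b m))
  /\ (forall m a b, r m (a + b) = r m a + r m b)
  /\ (forall m n a, r (m + n) a = r m a + r n a)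
  /\ (forall k m a, r m (k *: a) = k *: r m a)
  /\ (forall k m a, r (k *: m) a = k *: r m a)
  /\ (forall m, r m 1 = m)
  /\ (forall m a b, r m (a * b) = r (r m a) b)
  /\ (forall a m b, r (l a m) b = l a (r m b)).

Variables (M M' : lmodType K).
Variables (lM : A -> M -> M) (rM : M -> A -> M).
Variables (lM' : A -> M' -> M') (rM' : M' -> A -> M').

(* An A-A-bimodule homomorphism  N1 (x)_A N2 -> A, written out as the
   corresponding A-balanced K-bilinear map N1 x N2 -> A which is left
   A-linear in the first and right A-linear in the second argument. *)
Definition bal_bihom (N1 N2 : lmodType K) (l1 : A -> N1 -> N1) (r1 : N1 -> A -> N1)
    (l2 : A -> N2 -> N2) (r2 : N2 -> A -> N2) (f : N1 -> N2 -> A) : Prop :=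
     (forall x y n, f (x + y) n = f x n + f y n)
  /\ (forall m x y, f m (x + y) = f m x + f m y)
  /\ (forall k m n, f (k *: m) n = k *: f m n)
  /\ (forall k m n, f m (k *: n) = k *: f m n)
  /\ (forall m a n, f (r1 m a) n = f m (l2 a n))
  /\ (forall a m n, f (l1 a m) n = a * f m n)
  /\ (forall m n a, f m (r2 n a) = f m n * a).

Definition bonded (phi : M -> M' -> A) (psi : M' -> M -> A) : Prop :=
  [/\ bal_bihom lM rM lM' rM' phi,
      bal_bihom lM' rM' lM rM psi,
      (forall (m : M) (m' : M') (m'' : M), lM (phi m m') m'' = rM m (psi m' m'')) &
      (forall (m' : M') (m : M) (m'' : M'), lM' (psi m' m) m'' = rM' m' (phi m m''))].

(* ---- The space T_A(M, M') ----
   Pure tensors ("words"): an element a of A (degree 0), a nonempty list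
   m_1 (x) ... (x) m_i of elements of M (degree i >= 1), or a nonempty list
   m'_1 (x) ... (x) m'_j of elements of M' (degree -j <= -1).  *)
Definition word := (A + (M * seq M) + (M' * seq M'))%type.

Definition W0 (a : A) : word := inl (inl a).
Definition mkP (u : seq M) : word :=
  if u is m :: s then inl (inr (m, s)) else W0 0.
Definition mkN (u : seq M') : word :=
  if u is m :: s then inr (m, s) else W0 0.

Definition deg (w : word) : int :=
  match w with
  | inl (inl _) => 0
  | inl (inr (_, s)) => (size s).+1%:Z
  | inr (_, s) => - (size s).+1%:Z
  end.

(* Formal K-linear combinations of pure tensors (the free K-vector space on
   words), and the coefficient of a word in such a combination. *)
Definition fsum := seq (K * word).
Definition coef (s : fsum) (w : word) : K :=
  \sum_(p <- s) (if p.2 == w then p.1 else 0).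

(* Defining relations of the tensor powers over A: multilinearity and
   A-balancedness in every slot of M^{(x)_A i} and M'^{(x)_A j}; in degree 0
   the relations of the K-vector space A itself. *)
Inductive trel : fsum -> Prop :=
  | rel0_add a b : trel [:: (1, W0 (a + b)); (-1, W0 a); (-1, W0 b)]
  | rel0_scale k a : trel [:: (1, W0 (k *: a)); (- k, W0 a)]
  | relP_add (p q : seq M) x y :
      trel [:: (1, mkP (p ++ (x + y) :: q)); (-1, mkP (p ++ x :: q));
               (-1, mkP (p ++ y :: q))]
  | relP_scale (p q : seq M) k x :
      trel [:: (1, mkP (p ++ (k *: x) :: q)); (- k, mkP (p ++ x :: q))]
  | relP_bal (p q : seq M) x y a :
      trel [:: (1, mkP (p ++ rM x a :: y :: q)); (-1, mkP (p ++ x :: lM a y :: q))]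
  | relN_add (p q : seq M') x y :
      trel [:: (1, mkN (p ++ (x + y) :: q)); (-1, mkN (p ++ x :: q));
               (-1, mkN (p ++ y :: q))]
  | relN_scale (p q : seq M') k x :
      trel [:: (1, mkN (p ++ (k *: x) :: q)); (- k, mkN (p ++ x :: q))]
  | relN_bal (p q : seq M') x y a :
      trel [:: (1, mkN (p ++ rM' x a :: y :: q)); (-1, mkN (p ++ x :: lM' a y :: q))].

Definition inspan (s : fsum) : Prop :=
  exists rs : seq (K * fsum),
    (forall r, r \in rs -> trel r.2) /\
    (forall w, coef s w = \sum_(r <- rs) r.1 * coef r.2 w).

Definition fopp (s : fsum) : fsum := [seq (- p.1, p.2) | p <- s].
Definition fscale (k : K) (s : fsum) : fsum := [seq (k * p.1, p.2) | p <- s].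

(* Equality in T_A(M) = (+)_{i>=1} M^{(x)i} (+) A (+) (+)_{i<=-1} M'^{(x)-i}. *)
Definition teqv (s t : fsum) : Prop := inspan (s ++ fopp t).

Definition lactP (a : A) (m : M) (s : seq M) : word := mkP (lM a m :: s).
Definition lactN (a : A) (m : M') (s : seq M') : word := mkN (lM' a m :: s).
Definition ractP (m : M) (s : seq M) (a : A) : word :=
  mkP (rev (match rev (m :: s) with x :: r => rM x a :: r | [::] => [::] end)).
Definition ractN (m : M') (s : seq M') (a : A) : word :=
  mkN (rev (match rev (m :: s) with x :: r => rM' x a :: r | [::] => [::] end)).

(* contrPN rs t a: contract (rev rs) (x) a (x) t, where rs is a reversed list
   of elements of M, a is the current middle element of A, t a list in M'. *)
Fixpoint contrPN (phi : M -> M' -> A) (rs : seq M) (t : seq M') (a : A) : word :=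
  match rs, t with
  | m :: rs', m' :: t' => contrPN phi rs' t' (phi (rM m a) m')
  | [::], [::] => W0 a
  | [::], m' :: t' => mkN (lM' a m' :: t')
  | m :: rs', [::] => mkP (rev (rM m a :: rs'))
  end.
Fixpoint contrNP (psi : M' -> M -> A) (rs : seq M') (t : seq M) (a : A) : word :=
  match rs, t with
  | m' :: rs', m :: t' => contrNP psi rs' t' (psi (rM' m' a) m)
  | [::], [::] => W0 a
  | [::], m :: t' => mkP (lM a m :: t')
  | m' :: rs', [::] => mkN (rev (rM' m' a :: rs'))
  end.

Definition wmul (phi : M -> M' -> A) (psi : M' -> M -> A) (w1 w2 : word) : word :=
  match w1, w2 with
  | inl (inl a), inl (inl b) => W0 (a * b)
  | inl (inl a), inl (inr (m, s)) => lactP a m s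
  | inl (inl a), inr (m, s) => lactN a m s
  | inl (inr (m, s)), inl (inl b) => ractP m s b
  | inr (m, s), inl (inl b) => ractN m s b
  | inl (inr (m, s)), inl (inr (n, t)) => mkP ((m :: s) ++ (n :: t))
  | inr (m, s), inr (n, t) => mkN ((m :: s) ++ (n :: t))
  | inl (inr (m, s)), inr (n, t) => contrPN phi (rev (m :: s)) (n :: t) 1
  | inr (m, s), inl (inr (n, t)) => contrNP psi (rev (m :: s)) (n :: t) 1
  end.

Definition fmul phi psi (s t : fsum) : fsum :=
  [seq (p.1 * q.1, wmul phi psi p.2 q.2) | p <- s, q <- t].
Definition fone : fsum := [:: (1, W0 1)].

Definition is_graded_algebra phi psi : Prop :=
  [/\ (forall w1 w2, deg (wmul phi psi w1 w2) = deg w1 + deg w2),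
      (forall s s' t t', teqv s s' -> teqv t t' ->
          teqv (fmul phi psi s t) (fmul phi psi s' t')),
      (forall k s t, teqv (fmul phi psi (fscale k s) t) (fscale k (fmul phi psi s t))
                  /\ teqv (fmul phi psi s (fscale k t)) (fscale k (fmul phi psi s t))),
      (forall s t u, teqv (fmul phi psi (fmul phi psi s t) u)
                          (fmul phi psi s (fmul phi psi t u))) &
      (forall s, teqv (fmul phi psi fone s) s /\ teqv (fmul phi psi s fone) s)].

End TensorAlgebraOfBondedPair.

(* Main.v *)
Require Import Defs.
From HB Require Import structures.
From mathcomp Require Import all_boot all_order all_algebra.
From mathcomp Require Import falgebra.
From mathcomp Require Import ring zify.
Set Implicit Arguments. Unset Strict Implicit. Unset Printing Implicit Defensive.
Import GRing.Theory.
Local Open Scope ring_scope.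

Fixpoint lastmap (T : Type) (f : T -> T) (s : seq T) : seq T :=
  match s with
  | [::] => [::]
  | x :: s' => if s' is [::] then [:: f x] else x :: lastmap f s'
  end.
Definition firstmap (T : Type) (f : T -> T) (s : seq T) : seq T :=
  if s is x :: s' then f x :: s' else [::].

Lemma lastmap_cons T (f : T -> T) y s : (0 < size s)%N -> lastmap f (y :: s) = y :: lastmap f s.
Proof. by case: s. Qed.

Lemma lastmap_rcons T (f : T -> T) s x : lastmap f (rcons s x) = rcons s (f x).
Proof. elim: s => [//|y s IH]; rewrite rcons_cons lastmap_cons ?IH //; by case: s {IH}. Qed.

Lemma lastmap_rev T (f : T -> T) s :
  rev (match rev s with x :: r => f x :: r | [::] => [::] end) = lastmap f s.
Proof. case/lastP: s => [//|s x]. by rewrite rev_rcons rev_cons revK lastmap_rcons. Qed.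

Lemma lastmap_cat T (f : T -> T) p x q : lastmap f (p ++ x :: q) = p ++ lastmap f (x :: q).
Proof. elim: p => [//|y p IH]; rewrite cat_cons lastmap_cons ?IH //; by case: p {IH}. Qed.

Lemma firstmap_cat T (f : T -> T) p x q :
  firstmap f (p ++ x :: q) = if p is [::] then f x :: q else firstmap f p ++ x :: q.
Proof. by case: p. Qed.

Lemma lastmap_id T (f : T -> T) s : (forall x, f x = x) -> lastmap f s = s.
Proof. move=> fE; elim: s => [//|y s IH] /=; case: s IH => [|z s] IH; by rewrite ?fE ?IH. Qed.

Lemma firstmap_lastmap T (F G : T -> T) s : (forall x, F (G x) = G (F x)) ->
  firstmap F (lastmap G s) = lastmap G (firstmap F s).
Proof. move=> FG; case: s => [//|x [|y s]] /=; by rewrite ?FG. Qed.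

Lemma size_lastmap T (f : T -> T) s : size (lastmap f s) = size s.
Proof. elim: s => [//|y s IH] /=; case: s IH => [|z s] IH //=; by rewrite IH. Qed.

Lemma rev_cons2 T (x : T) l y z : rev (x :: l ++ [:: y; z]) = z :: y :: rev (x :: l).
Proof. by rewrite -cat_cons rev_cat. Qed.
Lemma rev_cons1 T (x : T) l y : rev (x :: l ++ [:: y]) = y :: rev (x :: l).
Proof. by rewrite -cat_cons rev_cat. Qed.

Section Main.
Variables (K : fieldType) (A : falgType K) (M M' : lmodType K).
Variables (lM : A -> M -> M) (rM : M -> A -> M).
Variables (lM' : A -> M' -> M') (rM' : M' -> A -> M').
Variables (phi : M -> M' -> A) (psi : M' -> M -> A).
Hypotheses (HM : is_bimod lM rM) (HM' : is_bimod lM' rM')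
  (Hbond : bonded lM rM lM' rM' phi psi).

Local Notation word := (word A M M').
Local Notation fsum := (fsum A M M').
Local Notation Z := (@W0 K A M M').
Local Notation mP := (@mkP K A M M').
Local Notation mN := (@mkN K A M M').
Local Notation wm := (wmul lM rM lM' rM' phi psi).
Local Notation cPN := (contrPN rM lM' phi).
Local Notation cNP := (contrNP lM rM' psi).
Local Notation span := (inspan lM rM lM' rM').
Local Notation trl := (trel lM rM lM' rM').

Let lM_Dl : forall a b m, lM (a + b) m = lM a m + lM b m. Proof. by case: HM. Qed.
Let lM_Dr : forall a m n, lM a (m + n) = lM a m + lM a n. Proof. by case: HM => _ []. Qed.
Let lM_Zl : forall k a m, lM (k *: a) m = k *: lM a m. Proof. by case: HM => _ [] _ []. Qed.
Let lM_Zr : forall k a m, lM a (k *: m) = k *: lM a m. Proof. by case: HM => _ [] _ [] _ []. Qed.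
Let lM_1 : forall m, lM 1 m = m. Proof. by case: HM => _ [] _ [] _ [] _ []. Qed.
Let lM_mul : forall a b m, lM (a * b) m = lM a (lM b m). Proof. by case: HM => _ [] _ [] _ [] _ [] _ []. Qed.
Let rM_Dr : forall m a b, rM m (a + b) = rM m a + rM m b. Proof. by case: HM => _ [] _ [] _ [] _ [] _ [] _ []. Qed.
Let rM_Dl : forall m n a, rM (m + n) a = rM m a + rM n a. Proof. by case: HM => _ [] _ [] _ [] _ [] _ [] _ [] _ []. Qed.
Let rM_Zr : forall k m a, rM m (k *: a) = k *: rM m a. Proof. by case: HM => _ [] _ [] _ [] _ [] _ [] _ [] _ [] _ []. Qed.
Let rM_Zl : forall k m a, rM (k *: m) a = k *: rM m a. Proof. by case: HM => _ [] _ [] _ [] _ [] _ [] _ [] _ [] _ [] _ []. Qed.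
Let rM_1 : forall m, rM m 1 = m. Proof. by case: HM => _ [] _ [] _ [] _ [] _ [] _ [] _ [] _ [] _ [] _ []. Qed.
Let rM_mul : forall m a b, rM m (a * b) = rM (rM m a) b. Proof. by case: HM => _ [] _ [] _ [] _ [] _ [] _ [] _ [] _ [] _ [] _ [] _ []. Qed.
Let lrM : forall a m b, rM (lM a m) b = lM a (rM m b). Proof. by case: HM => _ [] _ [] _ [] _ [] _ [] _ [] _ [] _ [] _ [] _ [] _ []. Qed.

Let lM'_Dl : forall a b m, lM' (a + b) m = lM' a m + lM' b m. Proof. by case: HM'. Qed.
Let lM'_Dr : forall a m n, lM' a (m + n) = lM' a m + lM' a n. Proof. by case: HM' => _ []. Qed.
Let lM'_Zl : forall k a m, lM' (k *: a) m = k *: lM' a m. Proof. by case: HM' => _ [] _ []. Qed.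
Let lM'_Zr : forall k a m, lM' a (k *: m) = k *: lM' a m. Proof. by case: HM' => _ [] _ [] _ []. Qed.
Let lM'_1 : forall m, lM' 1 m = m. Proof. by case: HM' => _ [] _ [] _ [] _ []. Qed.
Let lM'_mul : forall a b m, lM' (a * b) m = lM' a (lM' b m). Proof. by case: HM' => _ [] _ [] _ [] _ [] _ []. Qed.
Let rM'_Dr : forall m a b, rM' m (a + b) = rM' m a + rM' m b. Proof. by case: HM' => _ [] _ [] _ [] _ [] _ [] _ []. Qed.
Let rM'_Dl : forall m n a, rM' (m + n) a = rM' m a + rM' n a. Proof. by case: HM' => _ [] _ [] _ [] _ [] _ [] _ [] _ []. Qed.
Let rM'_Zr : forall k m a, rM' m (k *: a) = k *: rM' m a. Proof. by case: HM' => _ [] _ [] _ [] _ [] _ [] _ [] _ [] _ []. Qed.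
Let rM'_Zl : forall k m a, rM' (k *: m) a = k *: rM' m a. Proof. by case: HM' => _ [] _ [] _ [] _ [] _ [] _ [] _ [] _ [] _ []. Qed.
Let rM'_1 : forall m, rM' m 1 = m. Proof. by case: HM' => _ [] _ [] _ [] _ [] _ [] _ [] _ [] _ [] _ [] _ []. Qed.
Let rM'_mul : forall m a b, rM' m (a * b) = rM' (rM' m a) b. Proof. by case: HM' => _ [] _ [] _ [] _ [] _ [] _ [] _ [] _ [] _ [] _ [] _ []. Qed.
Let lrM' : forall a m b, rM' (lM' a m) b = lM' a (rM' m b). Proof. by case: HM' => _ [] _ [] _ [] _ [] _ [] _ [] _ [] _ [] _ [] _ [] _ []. Qed.

Let Hphi : bal_bihom lM rM lM' rM' phi. Proof. by case: Hbond. Qed.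
Let Hpsi : bal_bihom lM' rM' lM rM psi. Proof. by case: Hbond. Qed.
Let phi_Dl : forall x y n, phi (x + y) n = phi x n + phi y n. Proof. by case: Hphi. Qed.
Let phi_Dr : forall m x y, phi m (x + y) = phi m x + phi m y. Proof. by case: Hphi => _ []. Qed.
Let phi_Zl : forall k m n, phi (k *: m) n = k *: phi m n. Proof. by case: Hphi => _ [] _ []. Qed.
Let phi_Zr : forall k m n, phi m (k *: n) = k *: phi m n. Proof. by case: Hphi => _ [] _ [] _ []. Qed.
Let phi_bal : forall m a n, phi (rM m a) n = phi m (lM' a n). Proof. by case: Hphi => _ [] _ [] _ [] _ []. Qed.
Let phi_L : forall a m n, phi (lM a m) n = a * phi m n. Proof. by case: Hphi => _ [] _ [] _ [] _ [] _ []. Qed.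
Let phi_R : forall m n a, phi m (rM' n a) = phi m n * a. Proof. by case: Hphi => _ [] _ [] _ [] _ [] _ []. Qed.
Let psi_Dl : forall x y n, psi (x + y) n = psi x n + psi y n. Proof. by case: Hpsi. Qed.
Let psi_Dr : forall m x y, psi m (x + y) = psi m x + psi m y. Proof. by case: Hpsi => _ []. Qed.
Let psi_Zl : forall k m n, psi (k *: m) n = k *: psi m n. Proof. by case: Hpsi => _ [] _ []. Qed.
Let psi_Zr : forall k m n, psi m (k *: n) = k *: psi m n. Proof. by case: Hpsi => _ [] _ [] _ []. Qed.
Let psi_bal : forall m a n, psi (rM' m a) n = psi m (lM a n). Proof. by case: Hpsi => _ [] _ [] _ [] _ []. Qed.
Let psi_L : forall a m n, psi (lM' a m) n = a * psi m n. Proof. by case: Hpsi => _ [] _ [] _ [] _ [] _ []. Qed.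
Let psi_R : forall m n a, psi m (rM n a) = psi m n * a. Proof. by case: Hpsi => _ [] _ [] _ [] _ [] _ []. Qed.
Let bond_p : forall m m' m'', lM (phi m m') m'' = rM m (psi m' m''). Proof. by case: Hbond. Qed.
Let bond_n : forall m' m m'', lM' (psi m' m) m'' = rM' m' (phi m m''). Proof. by case: Hbond. Qed.

Implicit Types (s t : fsum) (w : word).
Definition ev (g : word -> K) (s : fsum) : K := \sum_(p <- s) p.1 * g p.2.
Definition ind (w : word) (u : word) : K := (u == w)%:R.
Definition mapw (G : word -> word) (s : fsum) : fsum := [seq (p.1, G p.2) | p <- s].

Lemma coefE s w : coef s w = ev (ind w) s.
Proof. by apply: eq_bigr => p _; rewrite /ind; case: eqP; rewrite ?mulr1 ?mulr0. Qed.

Lemma ev_nil g : ev g [::] = 0. Proof. by rewrite /ev big_nil. Qed.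
Lemma ev_cons g p s : ev g (p :: s) = p.1 * g p.2 + ev g s. Proof. by rewrite /ev big_cons. Qed.
Lemma ev_cat g s t : ev g (s ++ t) = ev g s + ev g t. Proof. by rewrite /ev big_cat. Qed.
Lemma ev_scale g k s : ev g (fscale k s) = k * ev g s.
Proof. by rewrite /ev big_map mulr_sumr; apply: eq_bigr => p _ /=; rewrite mulrA. Qed.
Lemma ev_opp g s : ev g (fopp s) = - ev g s.
Proof. by rewrite /ev big_map -sumrN; apply: eq_bigr => p _ /=; rewrite mulNr. Qed.
Lemma ev_flatten g L : ev g (flatten L) = \sum_(l <- L) ev g l.
Proof. by rewrite /ev big_flatten. Qed.
Lemma ev_mapw g G s : ev g (mapw G s) = ev (fun u => g (G u)) s.
Proof. by rewrite /ev big_map. Qed.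
Lemma ev_ext g1 g2 s : (forall u, g1 u = g2 u) -> ev g1 s = ev g2 s.
Proof. by move=> E; apply: eq_bigr => p _; rewrite E. Qed.
Lemma ev_add g1 g2 s : ev (fun u => g1 u + g2 u) s = ev g1 s + ev g2 s.
Proof. by rewrite /ev -big_split; apply: eq_bigr => p _ /=; rewrite mulrDr. Qed.
Lemma ev_mull k g s : ev (fun u => k * g u) s = k * ev g s.
Proof. by rewrite /ev mulr_sumr; apply: eq_bigr => p _ /=; rewrite mulrCA. Qed.

Lemma ev_U g s (U : seq word) : uniq U -> {subset [seq p.2 | p <- s] <= U} ->
  ev g s = \sum_(u <- U) coef s u * g u.
Proof.
move=> Uu; elim: s => [|p s IH] sub.
  by rewrite ev_nil big1 // => u _; rewrite coefE ev_nil mul0r.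
rewrite ev_cons IH; last by move=> u us; apply: sub; rewrite inE us orbT.
have pU : p.2 \in U by apply: sub; rewrite inE eqxx.
rewrite [RHS](eq_bigr (fun u => p.1 * (ind u p.2 * g u) + coef s u * g u)); last first.
  by move=> u _; rewrite !coefE ev_cons /ind eq_sym; ring.
rewrite big_split /= -mulr_sumr; congr (_ * _ + _); symmetry.
rewrite (bigD1_seq p.2) //= /ind eqxx mul1r big1 ?addr0 // => u /negPf.
by rewrite eq_sym => ->; rewrite mul0r.
Qed.

Lemma ev_coef g s t : (forall w, coef s w = coef t w) -> ev g s = ev g t.
Proof.
move=> E; set U := undup [seq p.2 | p <- s ++ t].
have Uu : uniq U := undup_uniq _.
rewrite (@ev_U g s U) ?(@ev_U g t U) //.
- by apply: eq_bigr => u _; rewrite E.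
- by move=> u ut; rewrite mem_undup map_cat mem_cat ut orbT.
- by move=> u us; rewrite mem_undup map_cat mem_cat us.
Qed.

Lemma span_ext s t : (forall w, coef s w = coef t w) -> span t -> span s.
Proof. by move=> E [rs [H1 H2]]; exists rs; split => // w; rewrite E. Qed.

Lemma span0 s : (forall w, coef s w = 0) -> span s.
Proof. by move=> E; exists [::]; split => // w; rewrite E big_nil. Qed.

Lemma span_cat s t : span s -> span t -> span (s ++ t).
Proof.
move=> [rs [H1 H2]] [rt [H3 H4]]; exists (rs ++ rt); split.
  by move=> r; rewrite mem_cat => /orP [] ?; [apply: H1|apply: H3].
by move=> w; rewrite big_cat /= -H2 -H4 !coefE ev_cat.
Qed.

Lemma span_scale k s : span s -> span (fscale k s).
Proof.
move=> [rs [H1 H2]]; exists [seq (k * r.1, r.2) | r <- rs]; split.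
  by move=> r /mapP [r0 r0in ->]; exact: (H1 r0 r0in).
move=> w; rewrite coefE ev_scale -coefE H2 big_map mulr_sumr.
by apply: eq_bigr => r _ /=; rewrite mulrA.
Qed.

Lemma span_trel r : trl r -> span r.
Proof.
move=> Hr; exists [:: (1, r)]; split; first by move=> r'; rewrite inE => /eqP ->.
by move=> w; rewrite big_cons big_nil mul1r addr0.
Qed.

Lemma span_flatten L : (forall l, l \in L -> span l) -> span (flatten L).
Proof.
elim: L => [_|l L IH H]; first by apply: span0 => w; rewrite coefE ev_nil.
rewrite /=; apply: span_cat; first by apply: H; rewrite inE eqxx.
by apply: IH => l' l'in; apply: H; rewrite inE l'in orbT.
Qed.

Lemma span_comb (L : seq (K * fsum)) s : (forall l, l \in L -> span l.2) ->
  (forall w, coef s w = \sum_(l <- L) l.1 * coef l.2 w) -> span s.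
Proof.
move=> HL E; apply: (@span_ext _ (flatten [seq fscale l.1 l.2 | l <- L])).
  move=> w; rewrite E coefE ev_flatten big_map; apply: eq_bigr => l _.
  by rewrite ev_scale coefE.
by apply: span_flatten => l' /mapP [l lin ->]; apply: span_scale; apply: HL.
Qed.

Definition weq (x y : word) := span [:: (1, x); (-1, y)].
Definition ladd (u v w : word) := span [:: (1, u); (-1, v); (-1, w)].
Definition lsc (k : K) (u v : word) := span [:: (1, u); (- k, v)].

Lemma coef_cons p s w : coef (p :: s) w = p.1 * ind w p.2 + coef s w.
Proof. by rewrite !coefE ev_cons. Qed.
Lemma coef_nil (w : word) : coef [::] w = 0. Proof. by rewrite coefE ev_nil. Qed.
Lemma coef_cat s t w : coef (s ++ t) w = coef s w + coef t w.
Proof. by rewrite !coefE ev_cat. Qed.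

Lemma weq_refl x : weq x x.
Proof. by apply: span0 => w; rewrite !coef_cons coef_nil /=; ring. Qed.
Lemma weq_eq x y : x = y -> weq x y. Proof. by move=> ->; apply: weq_refl. Qed.
Lemma weq_sym x y : weq x y -> weq y x.
Proof.
move=> H; apply: (span_ext _ (span_scale (-1) H)) => w.
by rewrite !coefE ev_scale !ev_cons ev_nil /=; ring.
Qed.
Lemma weq_trans x y z : weq x y -> weq y z -> weq x z.
Proof.
move=> H1 H2; apply: (span_ext _ (span_cat H1 H2)) => w.
by rewrite coef_cat !coef_cons !coef_nil /=; ring.
Qed.
Lemma weq_trel x y : trl [:: (1, x); (-1, y)] -> weq x y.
Proof. exact: span_trel. Qed.

Lemma ladd_trel u v w : trl [:: (1, u); (-1, v); (-1, w)] -> ladd u v w.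
Proof. exact: span_trel. Qed.
Lemma lsc_trel k u v : trl [:: (1, u); (- k, v)] -> lsc k u v.
Proof. exact: span_trel. Qed.

Lemma ladd_weq u u' v w : weq u u' -> ladd u' v w -> ladd u v w.
Proof.
move=> H1 H2; apply: (span_ext _ (span_cat H1 H2)) => w'.
by rewrite coef_cat !coef_cons !coef_nil /=; ring.
Qed.
Lemma lsc_weq k u u' v : weq u u' -> lsc k u' v -> lsc k u v.
Proof.
move=> H1 H2; apply: (span_ext _ (span_cat H1 H2)) => w'.
by rewrite coef_cat !coef_cons !coef_nil /=; ring.
Qed.
Lemma ladd_weq3 u v w v' w' : ladd u v' w' -> weq v v' -> weq w w' -> ladd u v w.
Proof.
move=> H1 /weq_sym H2 /weq_sym H3; apply: (span_ext _ (span_cat H1 (span_cat H2 H3))) => w0.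
by rewrite !coef_cat !coef_cons !coef_nil /=; ring.
Qed.
Lemma lsc_weq2 k u v v' : lsc k u v' -> weq v v' -> lsc k u v.
Proof.
move=> H1 /weq_sym H2; apply: (span_ext _ (span_cat H1 (span_scale k H2))) => w0.
by rewrite !coefE ev_cat ev_scale !ev_cons ev_nil /=; ring.
Qed.

Definition resp (G : word -> word) := forall s, span s -> span (mapw G s).

Lemma resp_of_rel G : (forall r, trl r -> span (mapw G r)) -> resp G.
Proof.
move=> HG s [rs [H1 H2]].
apply: (@span_comb [seq (r.1, mapw G r.2) | r <- rs]).
  by move=> l /mapP [r rin ->]; apply: HG; apply: H1.
move=> w; rewrite big_map coefE ev_mapw.
have -> : ev (fun u => ind w (G u)) s =
          ev (fun u => ind w (G u)) (flatten [seq fscale r.1 r.2 | r <- rs]).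
  apply: ev_coef => w'; rewrite H2 coefE ev_flatten big_map.
  by apply: eq_bigr => r _; rewrite ev_scale coefE.
rewrite ev_flatten big_map; apply: eq_bigr => r _.
by rewrite ev_scale coefE ev_mapw.
Qed.

Lemma resp_weq G H : (forall u, weq (G u) (H u)) -> resp H -> resp G.
Proof.
move=> E HH s Hs.
apply: (span_ext _ (span_cat (HH s Hs)
   (span_flatten (L := [seq fscale p.1 [:: (1, G p.2); (-1, H p.2)] | p <- s]) _))).
  move=> w; rewrite coef_cat !coefE ev_flatten big_map !ev_mapw /ev -big_split /=.
  apply: eq_bigr => p _; rewrite !big_cons big_nil /=; ring.
by move=> l /mapP [p _ ->]; apply: span_scale; apply: E.
Qed.

Lemma resp_comp G H : resp G -> resp H -> resp (fun u => G (H u)).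
Proof.
move=> HG HH s Hs; have := HG _ (HH s Hs).
by rewrite /mapw -map_comp.
Qed.

Lemma resp_weqP G x y : resp G -> weq x y -> weq (G x) (G y).
Proof. by move=> HG H; apply: (HG _ H). Qed.

Lemma wordP (Pr : word -> Prop) : (forall a, Pr (Z a)) -> (forall (m : M) (l : seq M), Pr (mP (m :: l))) ->
  (forall (m : M') (l : seq M'), Pr (mN (m :: l))) -> forall w, Pr w.
Proof. by move=> H1 H2 H3 [[a|[m s]]|[m s]]; [apply: H1|apply: H2|apply: H3]. Qed.
Lemma wordN (Pr : word -> Prop) : (forall a, Pr (Z a)) -> (forall (m : M') (l : seq M'), Pr (mN (m :: l))) ->
  (forall (m : M) (l : seq M), Pr (mP (m :: l))) -> forall w, Pr w.
Proof. by move=> H1 H2 H3 [[a|[m s]]|[m s]]; [apply: H1|apply: H3|apply: H2]. Qed.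

Lemma szc (T : Type) (p : seq T) x q : (0 < size (p ++ x :: q))%N.
Proof. by rewrite size_cat addnS. Qed.
Lemma szcons (T : Type) (x : T) q : (0 < size (x :: q))%N.
Proof. by []. Qed.
Lemma size_firstmap T (f : T -> T) (s : seq T) : size (firstmap f s) = size s.
Proof. by case: s. Qed.
Lemma firstmap_catl T (f : T -> T) (s s' : seq T) : (0 < size s)%N -> firstmap f (s ++ s') = firstmap f s ++ s'.
Proof. by case: s. Qed.
Lemma lastmap_catr T (f : T -> T) (s s' : seq T) : (0 < size s')%N -> lastmap f (s ++ s') = s ++ lastmap f s'.
Proof. by case: s' => [//|x q] _; rewrite lastmap_cat. Qed.
Lemma rev_cons' T (x : T) l : rev (x :: l) = rev l ++ [:: x].
Proof. by rewrite rev_cons cats1. Qed.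
Lemma rev_cons2' T (x y : T) l : rev (x :: y :: l) = rev l ++ [:: y; x].
Proof. by rewrite !rev_cons' -catA. Qed.
Lemma rev_rcons' T (x : T) l : rev (l ++ [:: x]) = x :: rev l.
Proof. by rewrite cats1 rev_rcons. Qed.
Lemma rev_rcons2' T (x y : T) l : rev (l ++ [:: x; y]) = y :: x :: rev l.
Proof. by rewrite rev_cat. Qed.
Lemma size_revc T (x : T) l : (0 < size (rev l ++ [:: x]))%N.
Proof. by rewrite size_cat addn1. Qed.

Lemma rev1 T (x : T) : rev [:: x] = [:: x]. Proof. by []. Qed.
Lemma rev_nil0 T : rev ([::] : seq T) = [::]. Proof. by []. Qed.
Lemma lastmap_cons2 T (f : T -> T) (x y : T) l : lastmap f (x :: y :: l) = x :: lastmap f (y :: l).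
Proof. by []. Qed.

Local Hint Resolve szc szcons size_revc : core.

Lemma wm_z_p a (l : seq M) : (0 < size l)%N -> wm (Z a) (mP l) = mP (firstmap (lM a) l).
Proof. by case: l. Qed.
Lemma wm_p_z (l : seq M) b : (0 < size l)%N -> wm (mP l) (Z b) = mP (lastmap (rM^~ b) l).
Proof. case: l => [//|m l] _; exact: (congr1 mP (lastmap_rev _ _)). Qed.
Lemma wm_p_p (l l' : seq M) : (0 < size l)%N -> (0 < size l')%N -> wm (mP l) (mP l') = mP (l ++ l').
Proof. by case: l => [//|m l]; case: l'. Qed.
Lemma wm_p_n (l : seq M) (l' : seq M') : (0 < size l)%N -> (0 < size l')%N ->
  wm (mP l) (mN l') = cPN (rev l) l' 1.
Proof. by case: l => [//|m l]; case: l'. Qed.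

Lemma cPN_nn a : cPN [::] [::] a = Z a. Proof. by []. Qed.
Lemma cPN_nc (n : M') (l : seq M') a : cPN [::] (n :: l) a = mN (lM' a n :: l). Proof. by []. Qed.
Lemma cPN_nl (l : seq M') a : (0 < size l)%N -> cPN [::] l a = mN (firstmap (lM' a) l).
Proof. by case: l. Qed.
Lemma cPN_cn (m : M) (rs : seq M) a : cPN (m :: rs) [::] a = mP (rev rs ++ [:: rM m a]).
Proof. by rewrite -rev_cons'. Qed.
Lemma cPN_cc (m : M) (rs : seq M) (n : M') (l : seq M') a :
  cPN (m :: rs) (n :: l) a = cPN rs l (phi (rM m a) n).
Proof. by []. Qed.

Lemma CL_add_p (rs : seq M) (l : seq M') a1 a2 :
  ladd (cPN rs l (a1 + a2)) (cPN rs l a1) (cPN rs l a2).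
Proof.
elim: rs l a1 a2 => [|m rs IH] [|n l] a1 a2.
- by apply: ladd_trel; exact: rel0_add.
- by rewrite !cPN_nc lM'_Dl; apply: ladd_trel; exact: (relN_add _ _ _ _ [::] l).
- by rewrite !cPN_cn rM_Dr; apply: ladd_trel; exact: (relP_add _ _ _ _ (rev rs) [::]).
- by rewrite !cPN_cc rM_Dr phi_Dl; apply: IH.
Qed.

Lemma CL_sc_p (rs : seq M) (l : seq M') k a :
  lsc k (cPN rs l (k *: a)) (cPN rs l a).
Proof.
elim: rs l a => [|m rs IH] [|n l] a.
- by apply: lsc_trel; exact: rel0_scale.
- by rewrite !cPN_nc lM'_Zl; apply: lsc_trel; exact: (relN_scale _ _ _ _ [::] l).
- by rewrite !cPN_cn rM_Zr; apply: lsc_trel; exact: (relP_scale _ _ _ _ (rev rs) [::]).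
- by rewrite !cPN_cc rM_Zr phi_Zl; apply: IH.
Qed.

Lemma CPshift_p (x : M) a (rs : seq M) (l : seq M') c :
  cPN (rM x a :: rs) l c = cPN (x :: rs) l (a * c).
Proof. by case: l => [|n l]; rewrite ?cPN_cn ?cPN_cc rM_mul. Qed.

Lemma CP_add_p (rs1 rs2 : seq M) (l : seq M') b x y :
  ladd (cPN (rs1 ++ (x + y) :: rs2) l b) (cPN (rs1 ++ x :: rs2) l b) (cPN (rs1 ++ y :: rs2) l b).
Proof.
elim: rs1 l b => [|r rs1 IH] [|n l] b.
- rewrite !cat0s !cPN_cn rM_Dl; apply: ladd_trel; exact: (relP_add _ _ _ _ (rev rs2) [::]).
- by rewrite !cat0s !cPN_cc rM_Dl phi_Dl; apply: CL_add_p.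
- rewrite !cat_cons !cPN_cn !rev_pivot -!catA !cat_cons.
  by apply: ladd_trel; exact: (relP_add _ _ _ _ (rev rs2) (rev rs1 ++ [:: rM r b])).
- by rewrite !cat_cons !cPN_cc; apply: IH.
Qed.

Lemma CP_sc_p (rs1 rs2 : seq M) (l : seq M') b k x :
  lsc k (cPN (rs1 ++ (k *: x) :: rs2) l b) (cPN (rs1 ++ x :: rs2) l b).
Proof.
elim: rs1 l b => [|r rs1 IH] [|n l] b.
- rewrite !cat0s !cPN_cn rM_Zl; apply: lsc_trel; exact: (relP_scale _ _ _ _ (rev rs2) [::]).
- by rewrite !cat0s !cPN_cc rM_Zl phi_Zl; apply: CL_sc_p.
- rewrite !cat_cons !cPN_cn !rev_pivot -!catA !cat_cons.
  by apply: lsc_trel; exact: (relP_scale _ _ _ _ (rev rs2) (rev rs1 ++ [:: rM r b])).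
- by rewrite !cat_cons !cPN_cc; apply: IH.
Qed.

Lemma CP_bal_p (rs1 rs2 : seq M) (l : seq M') b (x y : M) a :
  weq (cPN (rs1 ++ y :: rM x a :: rs2) l b) (cPN (rs1 ++ lM a y :: x :: rs2) l b).
Proof.
elim: rs1 l b => [|r rs1 IH] [|n l] b.
- rewrite !cat0s !cPN_cn !rev_cons' -!catA lrM.
  by apply: weq_trel; exact: (relP_bal _ _ _ _ (rev rs2) [::] x (rM y b) a).
- by rewrite !cat0s !cPN_cc lrM phi_L CPshift_p; apply: weq_refl.
- rewrite !cat_cons !cPN_cn !rev_pivot !rev_cons' -!catA.
  by apply: weq_trel; exact: (relP_bal _ _ _ _ (rev rs2) (rev rs1 ++ [:: rM r b]) x y a).
- by rewrite !cat_cons !cPN_cc; apply: IH.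
Qed.

Lemma wm_z_n a (l : seq M') : (0 < size l)%N -> wm (Z a) (mN l) = mN (firstmap (lM' a) l).
Proof. by case: l. Qed.
Lemma wm_n_z (l : seq M') b : (0 < size l)%N -> wm (mN l) (Z b) = mN (lastmap (rM'^~ b) l).
Proof. case: l => [//|m l] _; exact: (congr1 mN (lastmap_rev _ _)). Qed.
Lemma wm_n_n (l l' : seq M') : (0 < size l)%N -> (0 < size l')%N -> wm (mN l) (mN l') = mN (l ++ l').
Proof. by case: l => [//|m l]; case: l'. Qed.
Lemma wm_n_p (l : seq M') (l' : seq M) : (0 < size l)%N -> (0 < size l')%N ->
  wm (mN l) (mP l') = cNP (rev l) l' 1.
Proof. by case: l => [//|m l]; case: l'. Qed.

Lemma cNP_nn a : cNP [::] [::] a = Z a. Proof. by []. Qed.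
Lemma cNP_nc (p : M) (l : seq M) a : cNP [::] (p :: l) a = mP (lM a p :: l). Proof. by []. Qed.
Lemma cNP_nl (l : seq M) a : (0 < size l)%N -> cNP [::] l a = mP (firstmap (lM a) l).
Proof. by case: l. Qed.
Lemma cNP_cn (m : M') (rs : seq M') a : cNP (m :: rs) [::] a = mN (rev rs ++ [:: rM' m a]).
Proof. by rewrite -rev_cons'. Qed.
Lemma cNP_cc (m : M') (rs : seq M') (p : M) (l : seq M) a :
  cNP (m :: rs) (p :: l) a = cNP rs l (psi (rM' m a) p).
Proof. by []. Qed.

Lemma CL_add_n (rs : seq M') (l : seq M) a1 a2 :
  ladd (cNP rs l (a1 + a2)) (cNP rs l a1) (cNP rs l a2).
Proof.
elim: rs l a1 a2 => [|m rs IH] [|p l] a1 a2.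
- by apply: ladd_trel; exact: rel0_add.
- by rewrite !cNP_nc lM_Dl; apply: ladd_trel; exact: (relP_add _ _ _ _ [::] l).
- by rewrite !cNP_cn rM'_Dr; apply: ladd_trel; exact: (relN_add _ _ _ _ (rev rs) [::]).
- by rewrite !cNP_cc rM'_Dr psi_Dl; apply: IH.
Qed.

Lemma CL_sc_n (rs : seq M') (l : seq M) k a :
  lsc k (cNP rs l (k *: a)) (cNP rs l a).
Proof.
elim: rs l a => [|m rs IH] [|p l] a.
- by apply: lsc_trel; exact: rel0_scale.
- by rewrite !cNP_nc lM_Zl; apply: lsc_trel; exact: (relP_scale _ _ _ _ [::] l).
- by rewrite !cNP_cn rM'_Zr; apply: lsc_trel; exact: (relN_scale _ _ _ _ (rev rs) [::]).
- by rewrite !cNP_cc rM'_Zr psi_Zl; apply: IH.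
Qed.

Lemma CPshift_n (x : M') a (rs : seq M') (l : seq M) c :
  cNP (rM' x a :: rs) l c = cNP (x :: rs) l (a * c).
Proof. by case: l => [|p l]; rewrite ?cNP_cn ?cNP_cc rM'_mul. Qed.

Lemma CP_add_n (rs1 rs2 : seq M') (l : seq M) b x y :
  ladd (cNP (rs1 ++ (x + y) :: rs2) l b) (cNP (rs1 ++ x :: rs2) l b) (cNP (rs1 ++ y :: rs2) l b).
Proof.
elim: rs1 l b => [|r rs1 IH] [|p l] b.
- rewrite !cat0s !cNP_cn rM'_Dl; apply: ladd_trel; exact: (relN_add _ _ _ _ (rev rs2) [::]).
- by rewrite !cat0s !cNP_cc rM'_Dl psi_Dl; apply: CL_add_n.
- rewrite !cat_cons !cNP_cn !rev_pivot -!catA !cat_cons.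
  by apply: ladd_trel; exact: (relN_add _ _ _ _ (rev rs2) (rev rs1 ++ [:: rM' r b])).
- by rewrite !cat_cons !cNP_cc; apply: IH.
Qed.

Lemma CP_sc_n (rs1 rs2 : seq M') (l : seq M) b k x :
  lsc k (cNP (rs1 ++ (k *: x) :: rs2) l b) (cNP (rs1 ++ x :: rs2) l b).
Proof.
elim: rs1 l b => [|r rs1 IH] [|p l] b.
- rewrite !cat0s !cNP_cn rM'_Zl; apply: lsc_trel; exact: (relN_scale _ _ _ _ (rev rs2) [::]).
- by rewrite !cat0s !cNP_cc rM'_Zl psi_Zl; apply: CL_sc_n.
- rewrite !cat_cons !cNP_cn !rev_pivot -!catA !cat_cons.
  by apply: lsc_trel; exact: (relN_scale _ _ _ _ (rev rs2) (rev rs1 ++ [:: rM' r b])).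
- by rewrite !cat_cons !cNP_cc; apply: IH.
Qed.

Lemma CP_bal_n (rs1 rs2 : seq M') (l : seq M) b (x y : M') a :
  weq (cNP (rs1 ++ y :: rM' x a :: rs2) l b) (cNP (rs1 ++ lM' a y :: x :: rs2) l b).
Proof.
elim: rs1 l b => [|r rs1 IH] [|p l] b.
- rewrite !cat0s !cNP_cn !rev_cons' -!catA lrM'.
  by apply: weq_trel; exact: (relN_bal _ _ _ _ (rev rs2) [::] x (rM' y b) a).
- by rewrite !cat0s !cNP_cc lrM' psi_L CPshift_n; apply: weq_refl.
- rewrite !cat_cons !cNP_cn !rev_pivot !rev_cons' -!catA.
  by apply: weq_trel; exact: (relN_bal _ _ _ _ (rev rs2) (rev rs1 ++ [:: rM' r b]) x y a).
- by rewrite !cat_cons !cNP_cc; apply: IH.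
Qed.

Lemma deg_p (l : seq M) : (0 < size l)%N -> deg (mP l) = (size l)%:Z.
Proof. by case: l. Qed.

Lemma deg_cPN (rs : seq M) (l : seq M') a : deg (cPN rs l a) = (size rs)%:Z - (size l)%:Z.
Proof.
elim: rs l a => [|m rs IH] [|n l] a.
- by rewrite cPN_nn.
- rewrite cPN_nc /=. lia.
- rewrite cPN_cn deg_p // size_cat size_rev addn1 /=. lia.
- rewrite cPN_cc IH /=. lia.
Qed.

Lemma deg_n (l : seq M') : (0 < size l)%N -> deg (mN l) = - (size l)%:Z.
Proof. by case: l. Qed.

Lemma deg_cNP (rs : seq M') (l : seq M) a : deg (cNP rs l a) = - (size rs)%:Z + (size l)%:Z.
Proof.
elim: rs l a => [|m rs IH] [|n l] a.
- by rewrite cNP_nn.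
- rewrite cNP_nc /=. lia.
- rewrite cNP_cn deg_n // size_cat size_rev addn1 /=. lia.
- rewrite cNP_cc IH /=. lia.
Qed.

Lemma R_add_p (p q : seq M) x y z :
  ladd (wm (mP (p ++ (x + y) :: q)) z) (wm (mP (p ++ x :: q)) z) (wm (mP (p ++ y :: q)) z).
Proof.
elim/wordP: z => [c|n t|n t].
- rewrite !wm_p_z // !lastmap_cat; case: q => [|q0 q].
    by rewrite /= rM_Dl; apply: ladd_trel; exact: (relP_add _ _ _ _ p [::]).
  rewrite !lastmap_cons2; apply: ladd_trel.
  exact: (relP_add _ _ _ _ p (lastmap (rM^~ c) (q0 :: q))).
- rewrite !wm_p_p // -!catA !cat_cons; apply: ladd_trel; exact: (relP_add _ _ _ _ p (q ++ n :: t)).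
- by rewrite !wm_p_n // !rev_pivot; apply: CP_add_p.
Qed.

Lemma R_sc_p (p q : seq M) k x z :
  lsc k (wm (mP (p ++ (k *: x) :: q)) z) (wm (mP (p ++ x :: q)) z).
Proof.
elim/wordP: z => [c|n t|n t].
- rewrite !wm_p_z // !lastmap_cat; case: q => [|q0 q].
    by rewrite /= rM_Zl; apply: lsc_trel; exact: (relP_scale _ _ _ _ p [::]).
  rewrite !lastmap_cons2; apply: lsc_trel.
  exact: (relP_scale _ _ _ _ p (lastmap (rM^~ c) (q0 :: q))).
- rewrite !wm_p_p // -!catA !cat_cons; apply: lsc_trel; exact: (relP_scale _ _ _ _ p (q ++ n :: t)).
- by rewrite !wm_p_n // !rev_pivot; apply: CP_sc_p.
Qed.

Lemma R_bal_p (p q : seq M) (x y : M) a z :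
  weq (wm (mP (p ++ rM x a :: y :: q)) z) (wm (mP (p ++ x :: lM a y :: q)) z).
Proof.
elim/wordP: z => [c|n t|n t].
- rewrite !wm_p_z // !lastmap_cat !lastmap_cons2; case: q => [|q0 q].
    by rewrite /= lrM; apply: weq_trel; exact: (relP_bal _ _ _ _ p [::] x (rM y c) a).
  rewrite !lastmap_cons2; apply: weq_trel.
  exact: (relP_bal _ _ _ _ p (lastmap (rM^~ c) (q0 :: q)) x y a).
- rewrite !wm_p_p // -!catA !cat_cons; apply: weq_trel; exact: (relP_bal _ _ _ _ p (q ++ n :: t)).
- by rewrite !wm_p_n // !rev_pivot !rev_cons' -!catA; apply: CP_bal_p.
Qed.

Lemma L0_add_p a (p q : seq M) x y :
  ladd (wm (Z a) (mP (p ++ (x + y) :: q))) (wm (Z a) (mP (p ++ x :: q))) (wm (Z a) (mP (p ++ y :: q))).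
Proof.
rewrite !wm_z_p // !firstmap_cat; case: p => [|p0 p].
  by rewrite lM_Dr; apply: ladd_trel; exact: (relP_add _ _ _ _ [::] q).
by apply: ladd_trel; exact: (relP_add _ _ _ _ (firstmap (lM a) (p0 :: p)) q).
Qed.

Lemma L0_sc_p a (p q : seq M) k x :
  lsc k (wm (Z a) (mP (p ++ (k *: x) :: q))) (wm (Z a) (mP (p ++ x :: q))).
Proof.
rewrite !wm_z_p // !firstmap_cat; case: p => [|p0 p].
  by rewrite lM_Zr; apply: lsc_trel; exact: (relP_scale _ _ _ _ [::] q).
by apply: lsc_trel; exact: (relP_scale _ _ _ _ (firstmap (lM a) (p0 :: p)) q).
Qed.

Lemma L0_bal_p a (p q : seq M) (x y : M) b :
  weq (wm (Z a) (mP (p ++ rM x b :: y :: q))) (wm (Z a) (mP (p ++ x :: lM b y :: q))).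
Proof.
rewrite !wm_z_p // !firstmap_cat; case: p => [|p0 p].
  by rewrite -lrM; apply: weq_trel; exact: (relP_bal _ _ _ _ [::] q (lM a x) y b).
by apply: weq_trel; exact: (relP_bal _ _ _ _ (firstmap (lM a) (p0 :: p)) q x y b).
Qed.

Lemma Lg_r0add_p (m : M) b c :
  ladd (wm (mP [:: m]) (Z (b + c))) (wm (mP [:: m]) (Z b)) (wm (mP [:: m]) (Z c)).
Proof. by rewrite !wm_p_z //= rM_Dr; apply: ladd_trel; exact: (relP_add _ _ _ _ [::] [::]). Qed.

Lemma Lg_r0sc_p (m : M) k b :
  lsc k (wm (mP [:: m]) (Z (k *: b))) (wm (mP [:: m]) (Z b)).
Proof. by rewrite !wm_p_z //= rM_Zr; apply: lsc_trel; exact: (relP_scale _ _ _ _ [::] [::]). Qed.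

Lemma Lg_same_add_p (m : M) (p q : seq M) x y :
  ladd (wm (mP [:: m]) (mP (p ++ (x + y) :: q))) (wm (mP [:: m]) (mP (p ++ x :: q)))
       (wm (mP [:: m]) (mP (p ++ y :: q))).
Proof. by rewrite !wm_p_p //; apply: ladd_trel; exact: (relP_add _ _ _ _ (m :: p) q). Qed.

Lemma Lg_same_sc_p (m : M) (p q : seq M) k x :
  lsc k (wm (mP [:: m]) (mP (p ++ (k *: x) :: q))) (wm (mP [:: m]) (mP (p ++ x :: q))).
Proof. by rewrite !wm_p_p //; apply: lsc_trel; exact: (relP_scale _ _ _ _ (m :: p) q). Qed.

Lemma Lg_same_bal_p (m : M) (p q : seq M) (x y : M) a :
  weq (wm (mP [:: m]) (mP (p ++ rM x a :: y :: q))) (wm (mP [:: m]) (mP (p ++ x :: lM a y :: q))).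
Proof. by rewrite !wm_p_p //; apply: weq_trel; exact: (relP_bal _ _ _ _ (m :: p) q). Qed.

Lemma Lg_opp_add_p (m : M) (p q : seq M') x y :
  ladd (wm (mP [:: m]) (mN (p ++ (x + y) :: q))) (wm (mP [:: m]) (mN (p ++ x :: q)))
       (wm (mP [:: m]) (mN (p ++ y :: q))).
Proof.
rewrite !wm_p_n // !rev1; case: p => [|p0 p].
  by rewrite !cat0s !cPN_cc phi_Dr; apply: CL_add_p.
rewrite !cat_cons !cPN_cc !cPN_nl // !firstmap_cat; case: p => [|p1 p].
  by rewrite lM'_Dr; apply: ladd_trel; exact: (relN_add _ _ _ _ [::] q).
by apply: ladd_trel; exact: (relN_add _ _ _ _ (firstmap (lM' (phi (rM m 1) p0)) (p1 :: p)) q).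
Qed.

Lemma Lg_opp_sc_p (m : M) (p q : seq M') k x :
  lsc k (wm (mP [:: m]) (mN (p ++ (k *: x) :: q))) (wm (mP [:: m]) (mN (p ++ x :: q))).
Proof.
rewrite !wm_p_n // !rev1; case: p => [|p0 p].
  by rewrite !cat0s !cPN_cc phi_Zr; apply: CL_sc_p.
rewrite !cat_cons !cPN_cc !cPN_nl // !firstmap_cat; case: p => [|p1 p].
  by rewrite lM'_Zr; apply: lsc_trel; exact: (relN_scale _ _ _ _ [::] q).
by apply: lsc_trel; exact: (relN_scale _ _ _ _ (firstmap (lM' (phi (rM m 1) p0)) (p1 :: p)) q).
Qed.

Lemma Lg_opp_bal_p (m : M) (p q : seq M') (x y : M') a :
  weq (wm (mP [:: m]) (mN (p ++ rM' x a :: y :: q))) (wm (mP [:: m]) (mN (p ++ x :: lM' a y :: q))).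
Proof.
rewrite !wm_p_n // !rev1; case: p => [|p0 p].
  by rewrite !cat0s !cPN_cc !cPN_nc phi_R lM'_mul; apply: weq_refl.
rewrite !cat_cons !cPN_cc !cPN_nl // !firstmap_cat; case: p => [|p1 p].
  by rewrite -lrM'; apply: weq_trel; exact: (relN_bal _ _ _ _ [::] q (lM' (phi (rM m 1) p0) x) y a).
by apply: weq_trel; exact: (relN_bal _ _ _ _ (firstmap (lM' (phi (rM m 1) p0)) (p1 :: p)) q x y a).
Qed.

Lemma R_add_n (n q : seq M') x y z :
  ladd (wm (mN (n ++ (x + y) :: q)) z) (wm (mN (n ++ x :: q)) z) (wm (mN (n ++ y :: q)) z).
Proof.
elim/wordN: z => [c|p t|p t].
- rewrite !wm_n_z // !lastmap_cat; case: q => [|q0 q].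
    by rewrite /= rM'_Dl; apply: ladd_trel; exact: (relN_add _ _ _ _ n [::]).
  rewrite !lastmap_cons2; apply: ladd_trel.
  exact: (relN_add _ _ _ _ n (lastmap (rM'^~ c) (q0 :: q))).
- rewrite !wm_n_n // -!catA !cat_cons; apply: ladd_trel; exact: (relN_add _ _ _ _ n (q ++ p :: t)).
- by rewrite !wm_n_p // !rev_pivot; apply: CP_add_n.
Qed.

Lemma R_sc_n (n q : seq M') k x z :
  lsc k (wm (mN (n ++ (k *: x) :: q)) z) (wm (mN (n ++ x :: q)) z).
Proof.
elim/wordN: z => [c|p t|p t].
- rewrite !wm_n_z // !lastmap_cat; case: q => [|q0 q].
    by rewrite /= rM'_Zl; apply: lsc_trel; exact: (relN_scale _ _ _ _ n [::]).
  rewrite !lastmap_cons2; apply: lsc_trel.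
  exact: (relN_scale _ _ _ _ n (lastmap (rM'^~ c) (q0 :: q))).
- rewrite !wm_n_n // -!catA !cat_cons; apply: lsc_trel; exact: (relN_scale _ _ _ _ n (q ++ p :: t)).
- by rewrite !wm_n_p // !rev_pivot; apply: CP_sc_n.
Qed.

Lemma R_bal_n (n q : seq M') (x y : M') a z :
  weq (wm (mN (n ++ rM' x a :: y :: q)) z) (wm (mN (n ++ x :: lM' a y :: q)) z).
Proof.
elim/wordN: z => [c|p t|p t].
- rewrite !wm_n_z // !lastmap_cat !lastmap_cons2; case: q => [|q0 q].
    by rewrite /= lrM'; apply: weq_trel; exact: (relN_bal _ _ _ _ n [::] x (rM' y c) a).
  rewrite !lastmap_cons2; apply: weq_trel.
  exact: (relN_bal _ _ _ _ n (lastmap (rM'^~ c) (q0 :: q)) x y a).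
- rewrite !wm_n_n // -!catA !cat_cons; apply: weq_trel; exact: (relN_bal _ _ _ _ n (q ++ p :: t)).
- by rewrite !wm_n_p // !rev_pivot !rev_cons' -!catA; apply: CP_bal_n.
Qed.

Lemma L0_add_n a (n q : seq M') x y :
  ladd (wm (Z a) (mN (n ++ (x + y) :: q))) (wm (Z a) (mN (n ++ x :: q))) (wm (Z a) (mN (n ++ y :: q))).
Proof.
rewrite !wm_z_n // !firstmap_cat; case: n => [|p0 n].
  by rewrite lM'_Dr; apply: ladd_trel; exact: (relN_add _ _ _ _ [::] q).
by apply: ladd_trel; exact: (relN_add _ _ _ _ (firstmap (lM' a) (p0 :: n)) q).
Qed.

Lemma L0_sc_n a (n q : seq M') k x :
  lsc k (wm (Z a) (mN (n ++ (k *: x) :: q))) (wm (Z a) (mN (n ++ x :: q))).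
Proof.
rewrite !wm_z_n // !firstmap_cat; case: n => [|p0 n].
  by rewrite lM'_Zr; apply: lsc_trel; exact: (relN_scale _ _ _ _ [::] q).
by apply: lsc_trel; exact: (relN_scale _ _ _ _ (firstmap (lM' a) (p0 :: n)) q).
Qed.

Lemma L0_bal_n a (n q : seq M') (x y : M') b :
  weq (wm (Z a) (mN (n ++ rM' x b :: y :: q))) (wm (Z a) (mN (n ++ x :: lM' b y :: q))).
Proof.
rewrite !wm_z_n // !firstmap_cat; case: n => [|p0 n].
  by rewrite -lrM'; apply: weq_trel; exact: (relN_bal _ _ _ _ [::] q (lM' a x) y b).
by apply: weq_trel; exact: (relN_bal _ _ _ _ (firstmap (lM' a) (p0 :: n)) q x y b).
Qed.

Lemma Lg_r0add_n (m : M') b c :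
  ladd (wm (mN [:: m]) (Z (b + c))) (wm (mN [:: m]) (Z b)) (wm (mN [:: m]) (Z c)).
Proof. by rewrite !wm_n_z //= rM'_Dr; apply: ladd_trel; exact: (relN_add _ _ _ _ [::] [::]). Qed.

Lemma Lg_r0sc_n (m : M') k b :
  lsc k (wm (mN [:: m]) (Z (k *: b))) (wm (mN [:: m]) (Z b)).
Proof. by rewrite !wm_n_z //= rM'_Zr; apply: lsc_trel; exact: (relN_scale _ _ _ _ [::] [::]). Qed.

Lemma Lg_same_add_n (m : M') (n q : seq M') x y :
  ladd (wm (mN [:: m]) (mN (n ++ (x + y) :: q))) (wm (mN [:: m]) (mN (n ++ x :: q)))
       (wm (mN [:: m]) (mN (n ++ y :: q))).
Proof. by rewrite !wm_n_n //; apply: ladd_trel; exact: (relN_add _ _ _ _ (m :: n) q). Qed.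

Lemma Lg_same_sc_n (m : M') (n q : seq M') k x :
  lsc k (wm (mN [:: m]) (mN (n ++ (k *: x) :: q))) (wm (mN [:: m]) (mN (n ++ x :: q))).
Proof. by rewrite !wm_n_n //; apply: lsc_trel; exact: (relN_scale _ _ _ _ (m :: n) q). Qed.

Lemma Lg_same_bal_n (m : M') (n q : seq M') (x y : M') a :
  weq (wm (mN [:: m]) (mN (n ++ rM' x a :: y :: q))) (wm (mN [:: m]) (mN (n ++ x :: lM' a y :: q))).
Proof. by rewrite !wm_n_n //; apply: weq_trel; exact: (relN_bal _ _ _ _ (m :: n) q). Qed.

Lemma Lg_opp_add_n (m : M') (n q : seq M) x y :
  ladd (wm (mN [:: m]) (mP (n ++ (x + y) :: q))) (wm (mN [:: m]) (mP (n ++ x :: q)))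
       (wm (mN [:: m]) (mP (n ++ y :: q))).
Proof.
rewrite !wm_n_p // !rev1; case: n => [|p0 n].
  by rewrite !cat0s !cNP_cc psi_Dr; apply: CL_add_n.
rewrite !cat_cons !cNP_cc !cNP_nl // !firstmap_cat; case: n => [|p1 n].
  by rewrite lM_Dr; apply: ladd_trel; exact: (relP_add _ _ _ _ [::] q).
by apply: ladd_trel; exact: (relP_add _ _ _ _ (firstmap (lM (psi (rM' m 1) p0)) (p1 :: n)) q).
Qed.

Lemma Lg_opp_sc_n (m : M') (n q : seq M) k x :
  lsc k (wm (mN [:: m]) (mP (n ++ (k *: x) :: q))) (wm (mN [:: m]) (mP (n ++ x :: q))).
Proof.
rewrite !wm_n_p // !rev1; case: n => [|p0 n].
  by rewrite !cat0s !cNP_cc psi_Zr; apply: CL_sc_n.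
rewrite !cat_cons !cNP_cc !cNP_nl // !firstmap_cat; case: n => [|p1 n].
  by rewrite lM_Zr; apply: lsc_trel; exact: (relP_scale _ _ _ _ [::] q).
by apply: lsc_trel; exact: (relP_scale _ _ _ _ (firstmap (lM (psi (rM' m 1) p0)) (p1 :: n)) q).
Qed.

Lemma Lg_opp_bal_n (m : M') (n q : seq M) (x y : M) a :
  weq (wm (mN [:: m]) (mP (n ++ rM x a :: y :: q))) (wm (mN [:: m]) (mP (n ++ x :: lM a y :: q))).
Proof.
rewrite !wm_n_p // !rev1; case: n => [|p0 n].
  by rewrite !cat0s !cNP_cc !cNP_nc psi_R lM_mul; apply: weq_refl.
rewrite !cat_cons !cNP_cc !cNP_nl // !firstmap_cat; case: n => [|p1 n].
  by rewrite -lrM; apply: weq_trel; exact: (relP_bal _ _ _ _ [::] q (lM (psi (rM' m 1) p0) x) y a).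
by apply: weq_trel; exact: (relP_bal _ _ _ _ (firstmap (lM (psi (rM' m 1) p0)) (p1 :: n)) q x y a).
Qed.


Lemma GA0_p_z a (m : M) (l : seq M) c :
  weq (wm (wm (Z a) (mP (m :: l))) (Z c)) (wm (Z a) (wm (mP (m :: l)) (Z c))).
Proof.
rewrite wm_z_p // wm_p_z ?size_firstmap // wm_p_z // wm_z_p ?size_lastmap //.
rewrite firstmap_lastmap; first exact: weq_refl.
by move=> v /=; rewrite lrM.
Qed.

Lemma GA0_p_p a (m : M) (l : seq M) (n : M) (t : seq M) :
  weq (wm (wm (Z a) (mP (m :: l))) (mP (n :: t))) (wm (Z a) (wm (mP (m :: l)) (mP (n :: t)))).
Proof.
rewrite wm_z_p // wm_p_p ?size_firstmap // wm_p_p // wm_z_p // firstmap_catl //.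
exact: weq_refl.
Qed.

Lemma LA_p a (m : M) (rs : seq M) (t : seq M') b :
  cPN (rs ++ [:: lM a m]) t b = wm (Z a) (cPN (rs ++ [:: m]) t b).
Proof.
elim: rs t b => [|r rs IH] [|n t] b.
- by rewrite !cat0s !cPN_cn lrM.
- rewrite !cat0s !cPN_cc lrM phi_L; case: t => [//|n' t].
  by rewrite !cPN_nc lM'_mul.
- by rewrite !cat_cons !cPN_cn !rev_rcons'.
- by rewrite !cat_cons !cPN_cc IH.
Qed.

Lemma GA0_p_n a (m : M) (l : seq M) (n : M') (t : seq M') :
  weq (wm (wm (Z a) (mP (m :: l))) (mN (n :: t))) (wm (Z a) (wm (mP (m :: l)) (mN (n :: t)))).
Proof.
rewrite wm_z_p // wm_p_n ?size_firstmap // wm_p_n //= !rev_cons' LA_p.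
exact: weq_refl.
Qed.

Lemma L2_p (m : M) (rs : seq M) (l : seq M') b :
  cPN (rs ++ [:: m]) l b = wm (mP [:: m]) (cPN rs l b).
Proof.
elim: rs l b => [|r rs IH] [|n l] b.
- by rewrite cat0s cPN_cn cPN_nn wm_p_z.
- by rewrite cat0s !cPN_cc cPN_nc wm_p_n // rev1 cPN_cc rM_1 phi_bal.
- by rewrite cat_cons !cPN_cn rev_rcons' wm_p_p.
- by rewrite cat_cons !cPN_cc IH.
Qed.

Lemma L4_p (m : M) (n : M') (z : seq M) a :
  weq (wm (mP [:: m]) (cNP [:: n] z a)) (cNP [::] z (phi m n * a)).
Proof.
case: z => [|q [|u0 u]].
- rewrite cNP_cn rev_nil0 cat0s cNP_nn wm_p_n // rev1 cPN_cc cPN_nn rM_1 phi_R.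
  exact: weq_refl.
- rewrite cNP_cc cNP_nn wm_p_z // cNP_nc -phi_R bond_p; exact: weq_refl.
- rewrite cNP_cc cNP_nc wm_p_p // cNP_nc -phi_R bond_p.
  by apply: weq_sym; apply: weq_trel; exact: (relP_bal _ _ _ _ [::] u m u0 (psi (rM' n a) q)).
Qed.

Lemma L3_p (m : M) (rs0 : seq M') (t1 n : M') (z : seq M) a :
  weq (wm (mP [:: m]) (cNP (rs0 ++ [:: t1; n]) z a)) (cNP (rs0 ++ [:: lM' (phi m n) t1]) z a).
Proof.
elim: rs0 z a => [|x rs IH] [|q u] a.
- rewrite !cat0s !cNP_cn rev1 rev_nil0 cat0s wm_p_n // rev1 cat1s cPN_cc cPN_nc rM_1 lrM'.
  exact: weq_refl.
- rewrite !cat0s !cNP_cc; apply: weq_trans (L4_p _ _ _ _) _.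
  rewrite lrM' psi_L; exact: weq_refl.
- rewrite !cat_cons !cNP_cn rev_rcons2' rev_rcons' wm_p_n // rev1 !cat_cons cPN_cc cPN_nc rM_1.
  exact: weq_refl.
- by rewrite !cat_cons !cNP_cc; apply: IH.
Qed.

Lemma GAg_z_z_p (m : M) b c :
  weq (wm (wm (mP [:: m]) (Z b)) (Z c)) (wm (mP [:: m]) (wm (Z b) (Z c))).
Proof. by rewrite !wm_p_z //= rM_mul; apply: weq_refl. Qed.

Lemma GAg_z_p_p (m : M) b (n : M) (t : seq M) :
  weq (wm (wm (mP [:: m]) (Z b)) (mP (n :: t))) (wm (mP [:: m]) (wm (Z b) (mP (n :: t)))).
Proof.
by apply: weq_trel; exact: (relP_bal _ _ _ _ [::] t m n b).
Qed.

Lemma GAg_z_n_p (m : M) b (n : M') (t : seq M') :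
  weq (wm (wm (mP [:: m]) (Z b)) (mN (n :: t))) (wm (mP [:: m]) (wm (Z b) (mN (n :: t)))).
Proof.
rewrite wm_p_z // wm_z_n // [lastmap _ _]/= [firstmap _ _]/= !wm_p_n // !rev1 !cPN_cc.
by rewrite rM_1 rM_1 phi_bal; exact: weq_refl.
Qed.

Lemma GAg_p_z_p (m : M) (n : M) (t : seq M) c :
  weq (wm (wm (mP [:: m]) (mP (n :: t))) (Z c)) (wm (mP [:: m]) (wm (mP (n :: t)) (Z c))).
Proof.
rewrite wm_p_p // wm_p_z // cat1s lastmap_cons2 wm_p_z // wm_p_p ?size_lastmap //.
exact: weq_refl.
Qed.

Lemma GAg_p_p_p (m : M) (n : M) (t : seq M) (n' : M) (t' : seq M) :
  weq (wm (wm (mP [:: m]) (mP (n :: t))) (mP (n' :: t'))) (wm (mP [:: m]) (wm (mP (n :: t)) (mP (n' :: t')))).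
Proof. by rewrite !wm_p_p // catA; apply: weq_refl. Qed.

Lemma GAg_p_n_p (m : M) (n : M) (t : seq M) (n' : M') (t' : seq M') :
  weq (wm (wm (mP [:: m]) (mP (n :: t))) (mN (n' :: t'))) (wm (mP [:: m]) (wm (mP (n :: t)) (mN (n' :: t')))).
Proof. by rewrite wm_p_p // !wm_p_n // cat1s rev_cons' L2_p; apply: weq_refl. Qed.

Lemma GAg_n_z_p (m : M) (n : M') (t : seq M') c :
  weq (wm (wm (mP [:: m]) (mN (n :: t))) (Z c)) (wm (mP [:: m]) (wm (mN (n :: t)) (Z c))).
Proof.
rewrite wm_p_n // rev1 cPN_cc wm_n_z // wm_p_n ?size_lastmap // rev1.
case: t => [|t0 t].
  by rewrite cPN_nn /= rM_1 phi_R; apply: weq_refl.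
rewrite cPN_nc wm_n_z // lastmap_cons2 cPN_cc cPN_nl ?size_lastmap // firstmap_lastmap.
  exact: weq_refl.
by move=> v /=; rewrite lrM'.
Qed.

Lemma GAg_n_n_p (m : M) (n : M') (t : seq M') (n' : M') (t' : seq M') :
  weq (wm (wm (mP [:: m]) (mN (n :: t))) (mN (n' :: t'))) (wm (mP [:: m]) (wm (mN (n :: t)) (mN (n' :: t')))).
Proof.
rewrite wm_p_n // rev1 cPN_cc wm_n_n // wm_p_n // rev1 cat_cons cPN_cc.
by case: t => [|t0 t]; apply: weq_refl.
Qed.

Lemma GAg_n_p_p (m : M) (n : M') (t : seq M') (q : M) (u : seq M) :
  weq (wm (wm (mP [:: m]) (mN (n :: t))) (mP (q :: u))) (wm (mP [:: m]) (wm (mN (n :: t)) (mP (q :: u)))).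
Proof.
rewrite wm_p_n // rev1 cPN_cc rM_1 wm_n_p //.
case: t => [|t0 t].
  rewrite cPN_nn rev1; apply: weq_sym; apply: weq_trans (L4_p _ _ _ _) _.
  by rewrite mulr1 cNP_nc wm_z_p //; apply: weq_refl.
rewrite cPN_nc wm_n_p // rev_cons' rev_cons2'; apply: weq_sym; exact: L3_p.
Qed.

Lemma GA_p (m : M) y z : weq (wm (wm (mP [:: m]) y) z) (wm (mP [:: m]) (wm y z)).
Proof.
elim/wordP: y => [b|n t|n t]; elim/wordP: z => [c|n' t'|n' t'].
- exact: GAg_z_z_p.
- exact: GAg_z_p_p.
- exact: GAg_z_n_p.
- exact: GAg_p_z_p.
- exact: GAg_p_p_p.
- exact: GAg_p_n_p.
- exact: GAg_n_z_p.
- exact: GAg_n_p_p.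
- exact: GAg_n_n_p.
Qed.

Lemma GA0_n_z a (m : M') (l : seq M') c :
  weq (wm (wm (Z a) (mN (m :: l))) (Z c)) (wm (Z a) (wm (mN (m :: l)) (Z c))).
Proof.
rewrite wm_z_n // wm_n_z ?size_firstmap // wm_n_z // wm_z_n ?size_lastmap //.
rewrite firstmap_lastmap; first exact: weq_refl.
by move=> v /=; rewrite lrM'.
Qed.

Lemma GA0_n_n a (m : M') (l : seq M') (p : M') (t : seq M') :
  weq (wm (wm (Z a) (mN (m :: l))) (mN (p :: t))) (wm (Z a) (wm (mN (m :: l)) (mN (p :: t)))).
Proof.
rewrite wm_z_n // wm_n_n ?size_firstmap // wm_n_n // wm_z_n // firstmap_catl //.
exact: weq_refl.
Qed.

Lemma LA_n a (m : M') (rs : seq M') (t : seq M) b :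
  cNP (rs ++ [:: lM' a m]) t b = wm (Z a) (cNP (rs ++ [:: m]) t b).
Proof.
elim: rs t b => [|r rs IH] [|p t] b.
- by rewrite !cat0s !cNP_cn lrM'.
- rewrite !cat0s !cNP_cc lrM' psi_L; case: t => [//|n' t].
  by rewrite !cNP_nc lM_mul.
- by rewrite !cat_cons !cNP_cn !rev_rcons'.
- by rewrite !cat_cons !cNP_cc IH.
Qed.

Lemma GA0_n_p a (m : M') (l : seq M') (p : M) (t : seq M) :
  weq (wm (wm (Z a) (mN (m :: l))) (mP (p :: t))) (wm (Z a) (wm (mN (m :: l)) (mP (p :: t)))).
Proof.
rewrite wm_z_n // wm_n_p ?size_firstmap // wm_n_p //= !rev_cons' LA_n.
exact: weq_refl.
Qed.

Lemma L2_n (m : M') (rs : seq M') (l : seq M) b :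
  cNP (rs ++ [:: m]) l b = wm (mN [:: m]) (cNP rs l b).
Proof.
elim: rs l b => [|r rs IH] [|p l] b.
- by rewrite cat0s cNP_cn cNP_nn wm_n_z.
- by rewrite cat0s !cNP_cc cNP_nc wm_n_p // rev1 cNP_cc rM'_1 psi_bal.
- by rewrite cat_cons !cNP_cn rev_rcons' wm_n_n.
- by rewrite cat_cons !cNP_cc IH.
Qed.

Lemma L4_n (m : M') (p : M) (z : seq M') a :
  weq (wm (mN [:: m]) (cPN [:: p] z a)) (cPN [::] z (psi m p * a)).
Proof.
case: z => [|q [|u0 u]].
- rewrite cPN_cn rev_nil0 cat0s cPN_nn wm_n_p // rev1 cNP_cc cNP_nn rM'_1 psi_R.
  exact: weq_refl.
- rewrite cPN_cc cPN_nn wm_n_z // cPN_nc -psi_R bond_n; exact: weq_refl.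
- rewrite cPN_cc cPN_nc wm_n_n // cPN_nc -psi_R bond_n.
  by apply: weq_sym; apply: weq_trel; exact: (relN_bal _ _ _ _ [::] u m u0 (phi (rM p a) q)).
Qed.

Lemma L3_n (m : M') (rs0 : seq M) (t1 p : M) (z : seq M') a :
  weq (wm (mN [:: m]) (cPN (rs0 ++ [:: t1; p]) z a)) (cPN (rs0 ++ [:: lM (psi m p) t1]) z a).
Proof.
elim: rs0 z a => [|x rs IH] [|q u] a.
- rewrite !cat0s !cPN_cn rev1 rev_nil0 cat0s wm_n_p // rev1 cat1s cNP_cc cNP_nc rM'_1 lrM.
  exact: weq_refl.
- rewrite !cat0s !cPN_cc; apply: weq_trans (L4_n _ _ _ _) _.
  rewrite lrM phi_L; exact: weq_refl.
- rewrite !cat_cons !cPN_cn rev_rcons2' rev_rcons' wm_n_p // rev1 !cat_cons cNP_cc cNP_nc rM'_1.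
  exact: weq_refl.
- by rewrite !cat_cons !cPN_cc; apply: IH.
Qed.

Lemma GAg_z_z_n (m : M') b c :
  weq (wm (wm (mN [:: m]) (Z b)) (Z c)) (wm (mN [:: m]) (wm (Z b) (Z c))).
Proof. by rewrite !wm_n_z //= rM'_mul; apply: weq_refl. Qed.

Lemma GAg_z_n_n (m : M') b (p : M') (t : seq M') :
  weq (wm (wm (mN [:: m]) (Z b)) (mN (p :: t))) (wm (mN [:: m]) (wm (Z b) (mN (p :: t)))).
Proof.
by apply: weq_trel; exact: (relN_bal _ _ _ _ [::] t m p b).
Qed.

Lemma GAg_z_p_n (m : M') b (p : M) (t : seq M) :
  weq (wm (wm (mN [:: m]) (Z b)) (mP (p :: t))) (wm (mN [:: m]) (wm (Z b) (mP (p :: t)))).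
Proof.
rewrite wm_n_z // wm_z_p // [lastmap _ _]/= [firstmap _ _]/= !wm_n_p // !rev1 !cNP_cc.
by rewrite rM'_1 rM'_1 psi_bal; exact: weq_refl.
Qed.

Lemma GAg_n_z_n (m : M') (p : M') (t : seq M') c :
  weq (wm (wm (mN [:: m]) (mN (p :: t))) (Z c)) (wm (mN [:: m]) (wm (mN (p :: t)) (Z c))).
Proof.
rewrite wm_n_n // wm_n_z // cat1s lastmap_cons2 wm_n_z // wm_n_n ?size_lastmap //.
exact: weq_refl.
Qed.

Lemma GAg_n_n_n (m : M') (p : M') (t : seq M') (n' : M') (t' : seq M') :
  weq (wm (wm (mN [:: m]) (mN (p :: t))) (mN (n' :: t'))) (wm (mN [:: m]) (wm (mN (p :: t)) (mN (n' :: t')))).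
Proof. by rewrite !wm_n_n // catA; apply: weq_refl. Qed.

Lemma GAg_n_p_n (m : M') (p : M') (t : seq M') (n' : M) (t' : seq M) :
  weq (wm (wm (mN [:: m]) (mN (p :: t))) (mP (n' :: t'))) (wm (mN [:: m]) (wm (mN (p :: t)) (mP (n' :: t')))).
Proof. by rewrite wm_n_n // !wm_n_p // cat1s rev_cons' L2_n; apply: weq_refl. Qed.

Lemma GAg_p_z_n (m : M') (p : M) (t : seq M) c :
  weq (wm (wm (mN [:: m]) (mP (p :: t))) (Z c)) (wm (mN [:: m]) (wm (mP (p :: t)) (Z c))).
Proof.
rewrite wm_n_p // rev1 cNP_cc wm_p_z // wm_n_p ?size_lastmap // rev1.
case: t => [|t0 t].
  by rewrite cNP_nn /= rM'_1 psi_R; apply: weq_refl.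
rewrite cNP_nc wm_p_z // lastmap_cons2 cNP_cc cNP_nl ?size_lastmap // firstmap_lastmap.
  exact: weq_refl.
by move=> v /=; rewrite lrM.
Qed.

Lemma GAg_p_p_n (m : M') (p : M) (t : seq M) (n' : M) (t' : seq M) :
  weq (wm (wm (mN [:: m]) (mP (p :: t))) (mP (n' :: t'))) (wm (mN [:: m]) (wm (mP (p :: t)) (mP (n' :: t')))).
Proof.
rewrite wm_n_p // rev1 cNP_cc wm_p_p // wm_n_p // rev1 cat_cons cNP_cc.
by case: t => [|t0 t]; apply: weq_refl.
Qed.

Lemma GAg_p_n_n (m : M') (p : M) (t : seq M) (q : M') (u : seq M') :
  weq (wm (wm (mN [:: m]) (mP (p :: t))) (mN (q :: u))) (wm (mN [:: m]) (wm (mP (p :: t)) (mN (q :: u)))).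
Proof.
rewrite wm_n_p // rev1 cNP_cc rM'_1 wm_p_n //.
case: t => [|t0 t].
  rewrite cNP_nn rev1; apply: weq_sym; apply: weq_trans (L4_n _ _ _ _) _.
  by rewrite mulr1 cPN_nc wm_z_n //; apply: weq_refl.
rewrite cNP_nc wm_p_n // rev_cons' rev_cons2'; apply: weq_sym; exact: L3_n.
Qed.

Lemma GA_n (m : M') y z : weq (wm (wm (mN [:: m]) y) z) (wm (mN [:: m]) (wm y z)).
Proof.
elim/wordN: y => [b|p t|p t]; elim/wordN: z => [c|n' t'|n' t'].
- exact: GAg_z_z_n.
- exact: GAg_z_n_n.
- exact: GAg_z_p_n.
- exact: GAg_n_z_n.
- exact: GAg_n_n_n.
- exact: GAg_n_p_n.
- exact: GAg_p_z_n.
- exact: GAg_p_n_n.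
- exact: GAg_p_p_n.
Qed.


Lemma R_r0add a b z : ladd (wm (Z (a + b)) z) (wm (Z a) z) (wm (Z b) z).
Proof.
elim/wordP: z => [c|n t|n t].
- by rewrite /= mulrDl; apply: ladd_trel; exact: rel0_add.
- by rewrite /= /lactP /= lM_Dl; apply: ladd_trel; exact: (relP_add _ _ _ _ [::] t).
- by rewrite /= /lactN /= lM'_Dl; apply: ladd_trel; exact: (relN_add _ _ _ _ [::] t).
Qed.

Lemma R_r0sc k a z : lsc k (wm (Z (k *: a)) z) (wm (Z a) z).
Proof.
elim/wordP: z => [c|n t|n t].
- by rewrite /= -scalerAl; apply: lsc_trel; exact: rel0_scale.
- by rewrite /= /lactP /= lM_Zl; apply: lsc_trel; exact: (relP_scale _ _ _ _ [::] t).
- by rewrite /= /lactN /= lM'_Zl; apply: lsc_trel; exact: (relN_scale _ _ _ _ [::] t).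
Qed.

Lemma Rresp z : resp (fun u => wm u z).
Proof.
apply: resp_of_rel => r; case.
- move=> a b; exact: (R_r0add a b z).
- move=> k a; exact: (R_r0sc k a z).
- move=> p q x y; exact: (R_add_p p q x y z).
- move=> p q k x; exact: (R_sc_p p q k x z).
- move=> p q x y a; exact: (R_bal_p p q x y a z).
- move=> p q x y; exact: (R_add_n p q x y z).
- move=> p q k x; exact: (R_sc_n p q k x z).
- move=> p q x y a; exact: (R_bal_n p q x y a z).
Qed.

Lemma L0resp a : resp (wm (Z a)).
Proof.
apply: resp_of_rel => r; case.
- by move=> b c; rewrite /= mulrDr; apply: ladd_trel; exact: rel0_add.
- by move=> k b; rewrite /= -scalerAr; apply: lsc_trel; exact: rel0_scale.
- move=> p q x y; exact: (L0_add_p a p q x y).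
- move=> p q k x; exact: (L0_sc_p a p q k x).
- move=> p q x y b; exact: (L0_bal_p a p q x y b).
- move=> p q x y; exact: (L0_add_n a p q x y).
- move=> p q k x; exact: (L0_sc_n a p q k x).
- move=> p q x y b; exact: (L0_bal_n a p q x y b).
Qed.

Lemma Lgresp_p (m : M) : resp (wm (mP [:: m])).
Proof.
apply: resp_of_rel => r; case.
- move=> b c; exact: (Lg_r0add_p m b c).
- move=> k b; exact: (Lg_r0sc_p m k b).
- move=> p q x y; exact: (Lg_same_add_p m p q x y).
- move=> p q k x; exact: (Lg_same_sc_p m p q k x).
- move=> p q x y b; exact: (Lg_same_bal_p m p q x y b).
- move=> p q x y; exact: (Lg_opp_add_p m p q x y).
- move=> p q k x; exact: (Lg_opp_sc_p m p q k x).
- move=> p q x y b; exact: (Lg_opp_bal_p m p q x y b).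
Qed.

Lemma Lgresp_n (m : M') : resp (wm (mN [:: m])).
Proof.
apply: resp_of_rel => r; case.
- move=> b c; exact: (Lg_r0add_n m b c).
- move=> k b; exact: (Lg_r0sc_n m k b).
- move=> p q x y; exact: (Lg_opp_add_n m p q x y).
- move=> p q k x; exact: (Lg_opp_sc_n m p q k x).
- move=> p q x y b; exact: (Lg_opp_bal_n m p q x y b).
- move=> p q x y; exact: (Lg_same_add_n m p q x y).
- move=> p q k x; exact: (Lg_same_sc_n m p q k x).
- move=> p q x y b; exact: (Lg_same_bal_n m p q x y b).
Qed.

Lemma GA0 a y z : weq (wm (wm (Z a) y) z) (wm (Z a) (wm y z)).
Proof.
elim/wordP: y => [b|n t|n t].
- elim/wordP: z => [c|n t|n t].
  + by rewrite /= mulrA; apply: weq_refl.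
  + by rewrite /= /lactP /= lM_mul; apply: weq_refl.
  + by rewrite /= /lactN /= lM'_mul; apply: weq_refl.
- elim/wordP: z => [c|n' t'|n' t'].
  + exact: GA0_p_z.
  + exact: GA0_p_p.
  + exact: GA0_p_n.
- elim/wordP: z => [c|n' t'|n' t'].
  + exact: GA0_n_z.
  + exact: GA0_n_p.
  + exact: GA0_n_n.
Qed.

Lemma assoc_p (m : M) (l : seq M) y z :
  weq (wm (wm (mP (m :: l)) y) z) (wm (mP (m :: l)) (wm y z)).
Proof.
elim: l m y z => [|l0 l IH] m y z; first exact: GA_p.
have E : mP (m :: l0 :: l) = wm (mP [:: m]) (mP (l0 :: l)) by rewrite wm_p_p.
rewrite E.
apply: weq_trans (resp_weqP (Rresp z) (GA_p m (mP (l0 :: l)) y)) _.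
apply: weq_trans (GA_p m _ z) _.
apply: weq_trans (resp_weqP (Lgresp_p m) (IH l0 y z)) _.
exact: weq_sym (GA_p m _ _).
Qed.

Lemma Lresp_p (m : M) (l : seq M) : resp (wm (mP (m :: l))).
Proof.
elim: l m => [|l0 l IH] m; first exact: Lgresp_p.
apply: (@resp_weq _ (fun u => wm (mP [:: m]) (wm (mP (l0 :: l)) u))).
  move=> u; have -> : mP (m :: l0 :: l) = wm (mP [:: m]) (mP (l0 :: l)) by rewrite wm_p_p.
  exact: GA_p.
exact: resp_comp (Lgresp_p m) (IH l0).
Qed.

Lemma assoc_n (m : M') (l : seq M') y z :
  weq (wm (wm (mN (m :: l)) y) z) (wm (mN (m :: l)) (wm y z)).
Proof.
elim: l m y z => [|l0 l IH] m y z; first exact: GA_n.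
have E : mN (m :: l0 :: l) = wm (mN [:: m]) (mN (l0 :: l)) by rewrite wm_n_n.
rewrite E.
apply: weq_trans (resp_weqP (Rresp z) (GA_n m (mN (l0 :: l)) y)) _.
apply: weq_trans (GA_n m _ z) _.
apply: weq_trans (resp_weqP (Lgresp_n m) (IH l0 y z)) _.
exact: weq_sym (GA_n m _ _).
Qed.

Lemma Lresp_n (m : M') (l : seq M') : resp (wm (mN (m :: l))).
Proof.
elim: l m => [|l0 l IH] m; first exact: Lgresp_n.
apply: (@resp_weq _ (fun u => wm (mN [:: m]) (wm (mN (l0 :: l)) u))).
  move=> u; have -> : mN (m :: l0 :: l) = wm (mN [:: m]) (mN (l0 :: l)) by rewrite wm_n_n.
  exact: GA_n.
exact: resp_comp (Lgresp_n m) (IH l0).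
Qed.


Lemma assoc x y z : weq (wm (wm x y) z) (wm x (wm y z)).
Proof.
elim/wordP: x => [a|m l|m l]; [exact: GA0|exact: assoc_p|exact: assoc_n].
Qed.

Lemma Lresp x : resp (wm x).
Proof.
elim/wordP: x => [a|m l|m l]; [exact: L0resp|exact: Lresp_p|exact: Lresp_n].
Qed.

Lemma deg_wm w1 w2 : deg (wm w1 w2) = deg w1 + deg w2.
Proof.
elim/wordP: w1 => [a|m l|m l]; elim/wordP: w2 => [b|n t|n t].
- by rewrite /= addr0.
- by rewrite /= /lactP /= add0r.
- by rewrite /= /lactN /= add0r.
- by rewrite wm_p_z // !deg_p ?size_lastmap // addr0.
- rewrite wm_p_p // !deg_p // size_cat; lia.
- rewrite wm_p_n // deg_cPN deg_p // deg_n // size_rev; lia.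
- by rewrite wm_n_z // !deg_n ?size_lastmap // addr0.
- rewrite wm_n_p // deg_cNP deg_p // deg_n // size_rev; lia.
- rewrite wm_n_n // !deg_n // size_cat; lia.
Qed.

Lemma wm_1l w : wm (Z 1) w = w.
Proof.
elim/wordP: w => [b|n t|n t]; first by rewrite /= mul1r.
- by rewrite /= /lactP lM_1.
- by rewrite /= /lactN lM'_1.
Qed.

Lemma wm_1r w : wm w (Z 1) = w.
Proof.
elim/wordP: w => [b|n t|n t]; first by rewrite /= mulr1.
- by rewrite wm_p_z // lastmap_id.
- by rewrite wm_n_z // lastmap_id.
Qed.

Local Notation fm := (fmul lM rM lM' rM' phi psi).
Local Notation tq := (teqv lM rM lM' rM').

Lemma ev_fmul g s t : ev g (fm s t) = ev (fun u => ev (fun v => g (wm u v)) t) s.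
Proof.
rewrite /ev /fmul big_allpairs_dep /=; apply: eq_bigr => p _.
by rewrite mulr_sumr; apply: eq_bigr => q _ /=; rewrite mulrA.
Qed.

Lemma ev_sub g1 g2 s : ev (fun u => g1 u - g2 u) s = ev g1 s - ev g2 s.
Proof. by rewrite /ev -sumrB; apply: eq_bigr => p _; rewrite mulrBr. Qed.

Lemma tq_coef s t : (forall w, coef s w = coef t w) -> tq s t.
Proof.
move=> E; apply: span0 => w; move: (E w); rewrite coef_cat !coefE ev_opp => ->; ring.
Qed.

Lemma tq_trans s1 s2 s3 : tq s1 s2 -> tq s2 s3 -> tq s1 s3.
Proof.
move=> H1 H2; apply: (span_ext _ (span_cat H1 H2)) => w.
by rewrite !coef_cat !coefE !ev_opp; ring.
Qed.

Lemma fmul_respl d t : span d -> span (fm d t).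
Proof.
move=> Hd; apply: (@span_comb [seq (q.1, mapw (fun u => wm u q.2) d) | q <- t]).
  by move=> l /mapP [q _ ->]; apply: Rresp.
move=> w; rewrite big_map coefE ev_fmul /ev.
rewrite (eq_bigr (fun p => \sum_(q <- t) p.1 * (q.1 * ind w (wm p.2 q.2)))); last first.
  by move=> p _; rewrite mulr_sumr.
rewrite exchange_big; apply: eq_bigr => q _.
rewrite coefE ev_mapw /ev mulr_sumr; apply: eq_bigr => p _ /=; ring.
Qed.

Lemma fmul_respr s d : span d -> span (fm s d).
Proof.
move=> Hd; apply: (@span_comb [seq (p.1, mapw (wm p.2) d) | p <- s]).
  by move=> l /mapP [p _ ->]; apply: Lresp.
move=> w; rewrite big_map coefE ev_fmul /ev; apply: eq_bigr => p _.
by rewrite coefE ev_mapw.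
Qed.

Lemma tq_fmul s s' t t' : tq s s' -> tq t t' -> tq (fm s t) (fm s' t').
Proof.
move=> H1 H2; apply: (@tq_trans _ (fm s' t)).
  apply: (span_ext _ (fmul_respl t H1)) => w.
  rewrite coef_cat !coefE ev_opp !ev_fmul ev_cat ev_opp; ring.
apply: (span_ext _ (fmul_respr s' H2)) => w.
rewrite coef_cat !coefE ev_opp !ev_fmul -ev_sub; apply: ev_ext => u.
by rewrite ev_cat ev_opp.
Qed.

Lemma coef_fl (F : word -> fsum) s w :
  coef (flatten [seq fscale p.1 (F p.2) | p <- s]) w = ev (fun a => coef (F a) w) s.
Proof.
rewrite coefE ev_flatten big_map [RHS]/ev; apply: eq_bigr => p _.
by rewrite ev_scale coefE.
Qed.

Lemma span_fl (F : word -> fsum) s : (forall a, span (F a)) ->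
  span (flatten [seq fscale p.1 (F p.2) | p <- s]).
Proof. by move=> HF; apply: span_flatten => l /mapP [p _ ->]; apply: span_scale. Qed.

Lemma tq_assoc s t u : tq (fm (fm s t) u) (fm s (fm t u)).
Proof.
pose D3 a b := flatten [seq fscale r.1 [:: (1, wm (wm a b) r.2); (-1, wm a (wm b r.2))] | r <- u].
pose D2 a := flatten [seq fscale q.1 (D3 a q.2) | q <- t].
pose D1 := flatten [seq fscale p.1 (D2 p.2) | p <- s].
have H3 : forall a b, span (D3 a b).
  move=> a b; exact: (@span_fl (fun c => [:: (1, wm (wm a b) c); (-1, wm a (wm b c))]) u (assoc a b)).
have H2 : forall a, span (D2 a).
  move=> a; exact: (@span_fl (D3 a) t (H3 a)).
have HD : span D1 by exact: (@span_fl D2 s H2).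
have E1 w : coef D1 w = ev (fun a => coef (D2 a) w) s := coef_fl D2 s w.
have E2 a w : coef (D2 a) w = ev (fun b => coef (D3 a b) w) t := coef_fl (D3 a) t w.
have E3 a b w : coef (D3 a b) w = ev (fun c => coef [:: (1, wm (wm a b) c); (-1, wm a (wm b c))] w) u
  := coef_fl (fun c => [:: (1, wm (wm a b) c); (-1, wm a (wm b c))]) u w.
apply: (span_ext _ HD) => w.
rewrite E1 coef_cat !coefE ev_opp !ev_fmul.
rewrite -ev_sub; apply: ev_ext => a; rewrite E2.
rewrite ev_fmul -ev_sub; apply: ev_ext => b; rewrite E3.
rewrite -ev_sub; apply: ev_ext => c.
by rewrite !coef_cons coef_nil /=; ring.
Qed.

Lemma ev_fone g : ev g (@fone K A M M') = g (Z 1).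
Proof. by rewrite ev_cons ev_nil addr0 mul1r. Qed.

Theorem main_thm : is_graded_algebra lM rM lM' rM' phi psi.
Proof.
split.
- exact: deg_wm.
- exact: tq_fmul.
- move=> k s t; split; apply: tq_coef => w; rewrite !coefE !ev_fmul !ev_scale ?ev_fmul //.
  rewrite -ev_mull; apply: ev_ext => u; exact: ev_scale.
- exact: tq_assoc.
- move=> s; split; apply: tq_coef => w; rewrite !coefE ev_fmul.
    by rewrite ev_fone; apply: ev_ext => v; rewrite wm_1l.
  by apply: ev_ext => v; rewrite ev_fone wm_1r.
Qed.

End Main.

Theorem lemma2 (K : fieldType) (A : falgType K) (M M' : lmodType K)
    (lM : A -> M -> M) (rM : M -> A -> M)
    (lM' : A -> M' -> M') (rM' : M' -> A -> M')
    (phi : M -> M' -> A) (psi : M' -> M -> A)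
    (HM : is_bimod lM rM) (HM' : is_bimod lM' rM')
    (Hbond : bonded lM rM lM' rM' phi psi) :
  is_graded_algebra lM rM lM' rM' phi psi.
Proof. exact: main_thm. Qed.
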